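(* The relation $\{(\rho,\sigma,\pi):\rho,\sigma,\pi\text{ are total and }|\rho|+|\sigma|=|\pi|\}$ is $\Pi_3$-definable in $\mathbf Y^*=\langle\mathcal P,\le,[1]+[1]\rangle$.
   Context: $\mathcal P$ is the set of all integer partitions, including the empty partition $\emptyset$; a partition is a nonincreasing finite sequence of positive integers (its parts), and $|\pi|$ is the sum of its parts. A partition is total if it has exactly one part; $\emptyset$ also counts as total. Young's lattice $\mathbf Y=\langle\mathcal P,\le\rangle$ has $(s_1,\dots,s_r)\le(n_1,\dots,n_t)$ iff $r\le t$ and $s_i\le n_i$ for all $i\le r$; $\mathbf Y^*$ is $\mathbf Y$ with a constant symbol for the partition $(1,1)$. A relation is $\Pi_n$-definable if it is defined by a first-order formula in the language $\{\le,(1,1)\}$ in prenex form with $n$ alternating quantifier blocks, the outermost universal, and a quantifier-free matrix. *)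

(* Defs.v *)
From mathcomp Require Import all_boot.
Set Implicit Arguments. Unset Strict Implicit. Unset Printing Implicit Defensive.

Definition is_partition (s : seq nat) : bool :=
  sorted geq s && all (fun x => 0 < x) s.

Definition ipartition := {s : seq nat | is_partition s}.

Definition parts (p : ipartition) : seq nat := proj1_sig p.

Definition psize (p : ipartition) : nat := sumn (parts p).

Definition is_total (p : ipartition) : bool := size (parts p) <= 1.

Definition young_le (p q : ipartition) : Prop :=
  size (parts p) <= size (parts q) /\
  forall i, i < size (parts p) -> nth 0 (parts p) i <= nth 0 (parts q) i.

Lemma is_partition_11 : is_partition [:: 1; 1].
Proof. by []. Qed.
Definition part11 : ipartition := exist _ [:: 1; 1] is_partition_11.

Inductive term : Type :=
| TVar : nat -> term
| TC11 : term.

Inductive form : Type :=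
| FLe : term -> term -> form
| FEq : term -> term -> form
| FTrue : form
| FFalse : form
| FNot : form -> form
| FAnd : form -> form -> form
| FOr : form -> form -> form
| FImp : form -> form -> form
| FForall : nat -> form -> form
| FExists : nat -> form -> form.

Definition env := nat -> ipartition.

Definition upd (e : env) (x : nat) (p : ipartition) : env :=
  fun y => if y == x then p else e y.

Definition teval (e : env) (t : term) : ipartition :=
  match t with TVar x => e x | TC11 => part11 end.

Fixpoint sat (e : env) (f : form) : Prop :=
  match f with
  | FLe s t => young_le (teval e s) (teval e t)
  | FEq s t => teval e s = teval e t
  | FTrue => True
  | FFalse => False
  | FNot g => ~ sat e g
  | FAnd g h => sat e g /\ sat e h
  | FOr g h => sat e g \/ sat e h
  | FImp g h => sat e g -> sat e h
  | FForall x g => forall p, sat (upd e x p) g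
  | FExists x g => exists p, sat (upd e x p) g
  end.

Fixpoint qfree (f : form) : bool :=
  match f with
  | FLe _ _ | FEq _ _ | FTrue | FFalse => true
  | FNot g => qfree g
  | FAnd g h | FOr g h | FImp g h => qfree g && qfree h
  | FForall _ _ | FExists _ _ => false
  end.

(* Prenex formulas with n alternating quantifier blocks:
   IsPi n f : outermost block universal; IsSigma n f : outermost existential.
   (Blocks may be empty, so Pi_n includes Pi_m, Sigma_m for m < n.) *)
Inductive IsPi : nat -> form -> Prop :=
| Pi0 f : qfree f -> IsPi 0 f
| PiAll n x f : IsPi n.+1 f -> IsPi n.+1 (FForall x f)
| PiSig n f : IsSigma n f -> IsPi n.+1 f
with IsSigma : nat -> form -> Prop :=
| Sig0 f : qfree f -> IsSigma 0 f
| SigEx n x f : IsSigma n.+1 f -> IsSigma n.+1 (FExists x f)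
| SigPi n f : IsPi n f -> IsSigma n.+1 f.

Definition Pi_definable3 (n : nat) (R : ipartition -> ipartition -> ipartition -> Prop) : Prop :=
  exists f : form, IsPi n f /\
    forall e : env, (R (e 0) (e 1) (e 2) <-> sat e f).

(* Main.v *)
Require Import Defs.
From mathcomp Require Import all_boot.
From mathcomp Require Import zify.
From Stdlib Require Import Classical.
Set Implicit Arguments. Unset Strict Implicit. Unset Printing Implicit Defensive.

Definition lam (p : ipartition) (i : nat) : nat := nth 0 (parts p) i.

Lemma geq_trans : transitive geq.
Proof. move=> a b c /= H1 H2; lia. Qed.

Lemma lam_noninc p i j : i <= j -> lam p j <= lam p i.
Proof.
move=> Hij; rewrite /lam; case: p => s /= Hsp; case/andP: (Hsp) => Hs Hp.
case: (ltnP j (size s)) => Hj.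
- have Hi : i < size s by lia.
  have Hr : reflexive geq by move=> x /=.
  exact: (sorted_leq_nth geq_trans Hr 0 Hs).
- by rewrite nth_default.
Qed.

Lemma lam_size p i : size (parts p) <= i -> lam p i = 0.
Proof. by move=> H; rewrite /lam nth_default. Qed.

Lemma lam_pos p i : i < size (parts p) -> 0 < lam p i.
Proof.
move=> Hi; rewrite /lam; case: p Hi => s /= Hsp Hi; case/andP: (Hsp) => Hs Hp.
by move/allP: Hp; apply; apply: mem_nth.
Qed.

Lemma size_lam p q : (forall i, lam p i <= lam q i) -> size (parts p) <= size (parts q).
Proof.
move=> H; rewrite leqNgt; apply/negP => Hlt.
have := lam_pos Hlt; have := H (size (parts q)); rewrite (lam_size (leqnn _)); lia.
Qed.

Lemma part_ext p q : (forall i, lam p i = lam q i) -> p = q.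
Proof.
move=> H; apply: val_inj => /=.
have Hs : size (parts p) = size (parts q).
  by apply/eqP; rewrite eqn_leq !size_lam // => i; rewrite H.
apply: (eq_from_nth (x0 := 0)) => // i _; exact: H.
Qed.

Lemma youngE p q : young_le p q <-> forall i, lam p i <= lam q i.
Proof.
split.
- move=> [Hs Hi] i; case: (ltnP i (size (parts p))) => H; first exact: Hi.
  by rewrite (lam_size H).
- move=> H; split; first exact: size_lam.
  by move=> i _; apply: H.
Qed.

Definition noninc (f : nat -> nat) := forall i j, i <= j -> f j <= f i.

Lemma noninc_step f : (forall i, f i.+1 <= f i) -> noninc f.
Proof.
move=> H i j Hij; elim: j Hij => [|j IH] Hij; first by have -> : i = 0 by lia.
case: (ltnP i j.+1) => Hl.
- have := H j; have := IH (ltnSE Hl); lia.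
- have -> : i = j.+1 by lia. by [].
Qed.

Definition mkseq' (f : nat -> nat) N := sort geq [seq x <- map f (iota 0 N) | 0 < x].

Lemma geq_total : total geq.
Proof. move=> a b /=; lia. Qed.

Lemma mkseq_part f N : is_partition (mkseq' f N).
Proof.
rewrite /is_partition /mkseq' sort_sorted ?all_sort; last exact: geq_total.
by rewrite filter_all.
Qed.

Definition mkP f N : ipartition := exist _ (mkseq' f N) (mkseq_part f N).

Lemma sorted_map_iota f m N : noninc f -> sorted geq (map f (iota m N)).
Proof.
move=> Hf; elim: N m => [|N IH] m //=.
rewrite (path_sortedE geq_trans) IH andbT.
apply/allP => x /mapP [k]; rewrite mem_iota => /andP [H1 _] ->.
rewrite /=; apply: Hf; lia.
Qed.

Lemma nth_filt N : forall f, noninc f -> (forall i, N <= i -> f i = 0) ->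
  forall i, nth 0 [seq x <- map f (iota 0 N) | 0 < x] i = f i.
Proof.
elim: N => [|N IH] f Hf Hb i.
- by rewrite /= nth_nil Hb.
- have E : iota 1 N = [seq 1 + i | i <- iota 0 N] by rewrite -iotaDl.
  rewrite /= E -map_comp.
  have Hg : noninc (f \o addn 1) by move=> a b Hab /=; apply: Hf; lia.
  have Hgb : forall i, N <= i -> (f \o addn 1) i = 0 by move=> a Ha /=; apply: Hb; lia.
  case: (posnP (f 0)) => H0.
  + rewrite IH //=.
    have := Hf 0 i (leq0n _); have := Hf 0 (1 + i) (leq0n _); lia.
  + case: i => [|i] //=; rewrite IH //.
Qed.

Lemma lam_mkP f N : noninc f -> (forall i, N <= i -> f i = 0) ->
  forall i, lam (mkP f N) i = f i.
Proof.
move=> Hf Hb i; rewrite /lam /= /mkseq' sorted_sort; first exact: nth_filt.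
  exact: geq_trans.
apply: sorted_filter; first exact: geq_trans.
exact: sorted_map_iota.
Qed.

Notation "x <<= y" := (young_le x y) (at level 70).

Lemma lam11 i : lam part11 i = if i < 2 then 1 else 0.
Proof. case: i => [|i] //. case: i => [|i] //. rewrite /lam /=. by case: i. Qed.

Lemma le11 x : part11 <<= x <-> 0 < lam x 1.
Proof.
rewrite youngE; split.
- by move/(_ 1); rewrite lam11.
- move=> H i; rewrite lam11; case: ifP => // Hi.
  have : i <= 1 by lia. move/(lam_noninc x). lia.
Qed.

Lemma antisym x y : x <<= y -> y <<= x -> x = y.
Proof.
move=> /youngE H1 /youngE H2; apply: part_ext => i.
by apply/eqP; rewrite eqn_leq H1 H2.
Qed.

Lemma neq_lam x y i : lam x i <> lam y i -> x <> y.
Proof. by move=> H E; apply: H; rewrite E. Qed.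

Lemma is_total_lam x : is_total x <-> lam x 1 = 0.
Proof.
rewrite /is_total; split.
- move=> H; exact: lam_size.
- move=> H; rewrite leqNgt; apply/negP => /lam_pos; lia.
Qed.

Lemma psize_tot x : is_total x -> psize x = lam x 0.
Proof.
rewrite /is_total /psize /lam; case: x => [[|u [|v s]] H] //= _.
by rewrite addn0.
Qed.

Lemma lam_tail x i : lam x 1 = 0 -> 1 <= i -> lam x i = 0.
Proof. move=> H Hi; have := lam_noninc x Hi; lia. Qed.

Ltac nstep := apply: noninc_step.
Ltac splitifs := repeat match goal with |- context[if ?a == ?b then _ else _] => case: (a =P b) => ? end;
  repeat match goal with H : S ?x = S ?y |- _ => case: H => H end; try subst.

Definition tot k := mkP (fun i => if i == 0 then k else 0) 1.
Lemma lam_tot k i : lam (tot k) i = if i == 0 then k else 0.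
Proof.
apply: lam_mkP; last by case.
by nstep => j; case: j.
Qed.

Definition colp k := mkP (fun i => if i < k then 1 else 0) k.
Lemma lam_colp k i : lam (colp k) i = if i < k then 1 else 0.
Proof.
apply: lam_mkP.
- nstep => j; case: ifP; case: ifP => //; lia.
- move=> j Hj; case: ifP => //; lia.
Qed.

Definition stair c := mkP (fun i => c - i) c.
Lemma lam_stair c i : lam (stair c) i = c - i.
Proof.
apply: lam_mkP.
- nstep => j; lia.
- move=> j Hj; lia.
Qed.

Definition rect m k := mkP (fun i => if i < m then k else 0) m.
Lemma lam_rect m k i : lam (rect m k) i = if i < m then k else 0.
Proof.
apply: lam_mkP.
- nstep => j; case: ifP; case: ifP => //; lia.
- move=> j Hj; case: ifP => //; lia.
Qed.

Lemma tot_total k : lam (tot k) 1 = 0.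
Proof. by rewrite lam_tot. Qed.

Lemma exists_lt x y : x <<= y -> x <> y -> exists i, lam x i < lam y i.
Proof.
move=> H Hne; apply: NNPP => Hn; apply: Hne; apply: antisym => //.
apply/youngE => i; rewrite leqNgt; apply/negP => Hi; apply: Hn; by exists i.
Qed.

Lemma add1 x y : x <<= y -> x <> y -> exists r w, lam x r < lam y r /\
  (forall i, lam w i = lam x i + (if i == r then 1 else 0)) /\ w <<= y.
Proof.
move=> Hxy Hne; have Hex := exists_lt Hxy Hne.
case: (ex_minnP Hex) => r Hr0 Hmin.
have Hr : lam x r < lam y r := Hr0.
have Hle := (iffLR (youngE x y) Hxy).
have Hbef : forall i, i < r -> lam x i = lam y i.
  move=> i Hi; apply/eqP; rewrite eqn_leq Hle /= leqNgt; apply/negP => H.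
  have := Hmin i H; lia.
have Hrs : r < size (parts y).
  rewrite ltnNge; apply/negP => /lam_size; lia.
set f := fun i => lam x i + (if i == r then 1 else 0).
have Hf : noninc f.
  nstep => i; rewrite /f; have H1 := lam_noninc x (leqnSn i).
  case: (i.+1 =P r) => Hi1.
  - have Hi : i < r by lia.
    have H2 := Hbef i Hi; have H3 := lam_noninc y (leqnSn i).
    have -> : (i == r) = false by apply/eqP; lia.
    rewrite Hi1 in H3; rewrite Hi1; lia.
  - case: (i =P r) => Hir; lia.
have Hb : forall i, size (parts y) <= i -> f i = 0.
  move=> i Hi; rewrite /f; have := Hle i; rewrite (lam_size Hi).
  case: (i =P r) => ?; lia.
exists r, (mkP f (size (parts y))); split => //; split.
- by move=> i; rewrite lam_mkP.
- apply/youngE => i; rewrite lam_mkP // /f; have := Hle i.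
  case: (i =P r) => [->|]; lia.
Qed.

Lemma cover_char x y : x <<= y -> x <> y ->
  (forall w, x <<= w -> w <<= y -> w = x \/ w = y) ->
  exists r, forall i, lam y i = lam x i + (if i == r then 1 else 0).
Proof.
move=> Hxy Hne Hc; case: (add1 Hxy Hne) => r [w [Hr [Hw Hwy]]].
have Hxw : x <<= w by apply/youngE => i; rewrite Hw; lia.
case: (Hc w Hxw Hwy) => Ew.
- exfalso; have := Hw r; rewrite Ew eqxx; lia.
- exists r => i; by rewrite -Hw Ew.
Qed.
Definition V := TVar.
Definition Le x y := FLe (V x) (V y).
Definition Eqf x y := FEq (V x) (V y).
Definition Ne x y := FNot (Eqf x y).
Definition Tot x := FNot (FLe TC11 (V x)).
Definition Dom S y1 y2 w := FAnd (Le y2 y1) (FAnd (Ne y2 y1) (FAnd (Le y1 S) (FAnd (Ne y1 S)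
  (FNot (FAnd (Le y2 w) (FAnd (Le w S) (FAnd (Ne w y2) (FAnd (Ne w S) (Ne w y1))))))))).
Definition NS pi S y1 y2 t w := FOr (FNot (Le pi S))
  (FOr (FAnd (Tot t) (FAnd (Le t S) (FNot (Le t pi)))) (Dom S y1 y2 w)).
Definition CondF :=
 FAnd (Tot 11) (FAnd (FNot (FLe (V 11) TC11)) (FAnd (FImp (Le 19 11) (FOr (FLe (V 19) TC11) (Eqf 19 11)))
 (FAnd (Tot 12) (FAnd (Le 0 12) (FAnd (Ne 0 12) (FAnd (FImp (FAnd (Le 19 12) (Ne 19 12)) (Le 19 0))
 (FAnd (Le 14 13) (FAnd (Ne 14 13) (FAnd (FImp (Le 19 13) (FOr (Eqf 19 13) (Le 19 14)))
 (FAnd (Le 12 13) (FAnd (FImp (FAnd (Tot 19) (Le 19 13)) (Le 19 12))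
 (FAnd (FNot (Le 11 15)) (FAnd (Le 15 13) (FAnd (FImp (FAnd (FNot (Le 11 19)) (Le 19 13)) (Le 19 15))
 (FAnd (FNot (Le 15 4)) (FAnd (FImp (FAnd (Le 19 15) (Ne 19 15)) (Le 19 4))
 (FAnd (FNot (Le 13 3)) (FAnd (Le 13 16) (FAnd (Le 3 16)
   (FImp (FAnd (Le 3 19) (Le 19 16)) (FOr (Eqf 19 3) (Eqf 19 16)))))))))))))))))))))).
Definition Matrix := FAnd (Tot 0) (FAnd (Tot 1) (FAnd (Tot 2)
  (FOr (NS 2 3 5 6 7 17) (FOr (NS 1 4 8 9 10 18) CondF)))).
Definition phi :=
  FForall 3 (FForall 4 (FExists 5 (FExists 6 (FExists 7 (FExists 8 (FExists 9 (FExists 10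
  (FExists 11 (FExists 12 (FExists 13 (FExists 14 (FExists 15 (FExists 16
  (FForall 17 (FForall 18 (FForall 19 Matrix)))))))))))))))).

Lemma phi_Pi : IsPi 3 phi.
Proof.
do 2 apply: PiAll. apply: PiSig. do 12 apply: SigEx. apply: SigPi.
do 3 apply: PiAll. apply: PiSig. by apply: Sig0.
Qed.

Definition TotS x := ~ (part11 <<= x).
Definition DomS (S y1 y2 w : ipartition) := y2 <<= y1 /\ y2 <> y1 /\ y1 <<= S /\ y1 <> S /\
  ~ (y2 <<= w /\ w <<= S /\ w <> y2 /\ w <> S /\ w <> y1).
Definition NSS (pi S y1 y2 t w : ipartition) := ~ (pi <<= S) \/
  ((TotS t /\ t <<= S /\ ~ (t <<= pi)) \/ DomS S y1 y2 w).
Definition CondS (r s S B T t R yR K J z : ipartition) :=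
 TotS T /\ ~ (T <<= part11) /\ (z <<= T -> z <<= part11 \/ z = T) /\
 TotS t /\ r <<= t /\ r <> t /\ (z <<= t /\ z <> t -> z <<= r) /\
 yR <<= R /\ yR <> R /\ (z <<= R -> z = R \/ z <<= yR) /\
 t <<= R /\ (TotS z /\ z <<= R -> z <<= t) /\
 ~ (T <<= K) /\ K <<= R /\ (~ (T <<= z) /\ z <<= R -> z <<= K) /\
 ~ (K <<= B) /\ (z <<= K /\ z <> K -> z <<= B) /\
 ~ (R <<= S) /\ R <<= J /\ S <<= J /\ (S <<= z /\ z <<= J -> z = S \/ z = J).
Definition Sem (r s p : ipartition) := forall S B, exists y1 y2 ts y1B y2B tB T t R yR K J,
  forall w wB z, TotS r /\ TotS s /\ TotS p /\
   (NSS p S y1 y2 ts w \/ (NSS s B y1B y2B tB wB \/ CondS r s S B T t R yR K J z)).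

Lemma sat_phi e : sat e phi <-> Sem (e 0) (e 1) (e 2).
Proof. by []. Qed.

Lemma lam_pos_size p i : 0 < lam p i -> i < size (parts p).
Proof. move=> H; rewrite ltnNge; apply/negP => /lam_size; lia. Qed.

Lemma nd_step S : (forall y1 y2, ~ (forall w, DomS S y1 y2 w)) ->
  forall i, 0 < lam S i -> lam S i.+1 = (lam S i).-1.
Proof.
move=> Hnd i Hi; set m := lam S i.
have Hle := lam_noninc S (leqnSn i).
have His := lam_pos_size Hi.
case: (ltnP (lam S i.+1) m.-1) => Hc; last first.
- case: (ltnP (lam S i.+1) m) => Hc2; first by rewrite /m in Hc Hc2 *; lia.
  exfalso.
  have HP : exists k, m <= lam S k by exists i.
  have Hub : forall k, m <= lam S k -> k <= size (parts S).
    move=> k Hk; apply: ltnW; apply: lam_pos_size; lia.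
  case: (ex_maxnP HP Hub) => j Hj0 Hjmax.
  have Hj : m <= lam S j := Hj0.
  have Hij : i < j by apply: Hjmax; rewrite /m in Hc2 *; lia.
  have Hj1 : lam S j.+1 < m.
    rewrite ltnNge; apply/negP => H; have := Hjmax _ H; lia.
  have Hjm : lam S j = m by have := lam_noninc S (ltnW Hij); rewrite /m; lia.
  move: (j) Hij Hj Hjmax Hj1 Hjm => [|p] // Hip _ _ Hp2 Hp1.
  have Hpm : lam S p = m.
    have := lam_noninc S (leqnSn p); have : i <= p by lia.
    move/(lam_noninc S); rewrite /m; lia.
  have HpS : forall k, k <= p -> m <= lam S k.
    move=> k Hk; have := lam_noninc S Hk; lia.
  have Hp1s : p.+1 < size (parts S) by apply: lam_pos_size; lia.
  set f1 := fun k => if k == p.+1 then m.-1 else lam S k.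
  set f2 := fun k => if k == p.+1 then m.-1 else if k == p then m.-1 else lam S k.
  have Hf1 : noninc f1.
    nstep => k; rewrite /f1; have := lam_noninc S (leqnSn k).
    splitifs; lia.
  have Hf2 : noninc f2.
    nstep => k; rewrite /f2; have := lam_noninc S (leqnSn k).
    case: (k =P p.+1) => [->|Hk1].
      have -> : (p.+2 == p.+1) = false by apply/eqP; lia.
      have -> : (p.+2 == p) = false by apply/eqP; lia. lia.
    case: (k.+1 =P p.+1) => [[->]|Hk2]; first by rewrite eqxx; lia.
    case: (k =P p) => [Hk3|Hk3]; first lia.
    case: (k.+1 =P p) => [Hk4|Hk4]; last lia.
    have := HpS k (ltnW (eq_leq Hk4 : k < p)). lia.
  have Hb1 : forall k, size (parts S) <= k -> f1 k = 0.
    move=> k Hk; rewrite /f1 (lam_size Hk); case: (k =P p.+1) => ?; lia.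
  have Hb2 : forall k, size (parts S) <= k -> f2 k = 0.
    move=> k Hk; rewrite /f2 (lam_size Hk); case: (k =P p.+1) => ?; case: (k =P p) => ?; lia.
  set y1 := mkP f1 (size (parts S)); set y2 := mkP f2 (size (parts S)).
  have L1 k : lam y1 k = f1 k by apply: lam_mkP.
  have L2 k : lam y2 k = f2 k by apply: lam_mkP.
  apply: (Hnd y1 y2) => w.
  have Hm : 0 < m by [].
  split; [|split; [|split; [|split]]].
  + apply/youngE => k; rewrite L1 L2 /f1 /f2; splitifs; lia.
  + apply: (@neq_lam _ _ p); rewrite L1 L2 /f1 /f2 eqxx.
    have -> : (p == p.+1) = false by apply/eqP; lia. lia.
  + apply/youngE => k; rewrite L1 /f1; splitifs; lia.
  + apply: (@neq_lam _ _ p.+1); rewrite L1 /f1 eqxx; lia.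
  + move=> [/youngE H1 [/youngE H2 [N1 [N2 N3]]]].
    have Eo : forall k, k != p -> k != p.+1 -> lam w k = lam S k.
      move=> k /eqP K1 /eqP K2; have := H1 k; have := H2 k.
      rewrite L2 /f2; case: (k =P p.+1) => // _; case: (k =P p) => // _; lia.
    have A1 := H1 p; have A2 := H1 p.+1; have A3 := H2 p; have A4 := H2 p.+1.
    have A5 := lam_noninc w (leqnSn p).
    have E : (p == p.+1) = false by apply/eqP; lia.
    rewrite L2 /f2 eqxx in A2; rewrite L2 /f2 E eqxx in A1.
    have Hw: forall y : ipartition, lam y p = lam w p -> lam y p.+1 = lam w p.+1 ->
      (forall k, k != p -> k != p.+1 -> lam y k = lam S k) -> w = y.
      move=> y Y1 Y2 Y3; apply: part_ext => k.
      case: (k =P p) => [->|K1]; first by [].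
      case: (k =P p.+1) => [->|K2]; first by [].
      by rewrite Eo ?Y3 //; apply/eqP.
    have O1 : forall k, k != p -> k != p.+1 -> lam y1 k = lam S k.
      move=> k /eqP K1 /eqP K2; rewrite L1 /f1; case: (k =P p.+1) => //.
    have O2 : forall k, k != p -> k != p.+1 -> lam y2 k = lam S k.
      move=> k /eqP K1 /eqP K2; rewrite L2 /f2; case: (k =P p.+1) => //; case: (k =P p) => //.
    have O3 : forall k, k != p -> k != p.+1 -> lam S k = lam S k by [].
    case: (ltnP (lam w p.+1) m) => B1; case: (ltnP (lam w p) m) => B2.
    * apply: N1; apply: Hw => //; rewrite L2 /f2 ?eqxx ?E; lia.
    * apply: N3; apply: Hw => //; rewrite L1 /f1 ?eqxx ?E; lia.
    * lia.
    * apply: N2; apply: Hw => //; lia.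
- exfalso.
  set f1 := fun k => if k == i then m.-1 else lam S k.
  set f2 := fun k => if k == i then m.-2 else lam S k.
  have Hf1 : noninc f1.
    nstep => k; rewrite /f1; have := lam_noninc S (leqnSn k). splitifs; lia.
  have Hf2 : noninc f2.
    nstep => k; rewrite /f2; have := lam_noninc S (leqnSn k). splitifs; lia.
  have Hb1 : forall k, size (parts S) <= k -> f1 k = 0.
    move=> k Hk; rewrite /f1 (lam_size Hk); case: (k =P i) => ?; lia.
  have Hb2 : forall k, size (parts S) <= k -> f2 k = 0.
    move=> k Hk; rewrite /f2 (lam_size Hk); case: (k =P i) => ?; lia.
  set y1 := mkP f1 (size (parts S)); set y2 := mkP f2 (size (parts S)).
  have L1 k : lam y1 k = f1 k by apply: lam_mkP.
  have L2 k : lam y2 k = f2 k by apply: lam_mkP.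
  apply: (Hnd y1 y2) => w.
  split; [|split; [|split; [|split]]].
  + apply/youngE => k; rewrite L1 L2 /f1 /f2; splitifs; lia.
  + apply: (@neq_lam _ _ i); rewrite L1 L2 /f1 /f2 eqxx; lia.
  + apply/youngE => k; rewrite L1 /f1; splitifs; lia.
  + apply: (@neq_lam _ _ i); rewrite L1 /f1 eqxx; lia.
  + move=> [/youngE H1 [/youngE H2 [N1 [N2 N3]]]].
    have Eo : forall k, k != i -> lam w k = lam S k.
      move=> k /eqP K1; have := H1 k; have := H2 k.
      rewrite L2 /f2; case: (k =P i) => // _; lia.
    have A1 := H1 i; have A3 := H2 i.
    rewrite L2 /f2 eqxx in A1.
    have Hw: forall y : ipartition, lam y i = lam w i ->
      (forall k, k != i -> lam y k = lam S k) -> w = y.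
      move=> y Y1 Y3; apply: part_ext => k.
      case: (k =P i) => [->|K1]; first by [].
      by rewrite Eo ?Y3 //; apply/eqP.
    have O1 : forall k, k != i -> lam y1 k = lam S k.
      move=> k /eqP K1; rewrite L1 /f1; case: (k =P i) => //.
    have O2 : forall k, k != i -> lam y2 k = lam S k.
      move=> k /eqP K1; rewrite L2 /f2; case: (k =P i) => //.
    case: (ltnP (lam w i) m.-1) => B1; last case: (ltnP (lam w i) m) => B2.
    * apply: N1; apply: Hw => //; rewrite L2 /f2 eqxx; lia.
    * apply: N3; apply: Hw => //; rewrite L1 /f1 eqxx; lia.
    * apply: N2; apply: Hw => //; rewrite /m in B2 *; lia.
Qed.

Lemma stair_of S c : (forall y1 y2, ~ (forall w, DomS S y1 y2 w)) -> lam S 0 = c ->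
  forall i, lam S i = c - i.
Proof.
move=> Hnd H0; elim => [|i IH]; first by rewrite H0 subn0.
case: (posnP (lam S i)) => Hi.
- have := lam_noninc S (leqnSn i); rewrite Hi; lia.
- rewrite (nd_step Hnd Hi) IH; lia.
Qed.

Lemma le_trans' x y z : x <<= y -> y <<= z -> x <<= z.
Proof. move=> /youngE H1 /youngE H2; apply/youngE => i; exact: leq_trans (H1 i) (H2 i). Qed.

Lemma stair_nd c y1 y2 : exists w, ~ DomS (stair c) y1 y2 w.
Proof.
set S := stair c.
have LS : forall i, lam S i = c - i by move=> i; rewrite lam_stair.
case: (classic (y2 <<= y1 /\ y2 <> y1 /\ y1 <<= S /\ y1 <> S)) =>
  [[H21 [N21 [H1S N1S]]]|Hn]; last first.
  by exists y1 => [[? [? [? [? _]]]]]; apply: Hn.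
case: (add1 H1S N1S) => r [w1 [Hr [Hw1 Hw1S]]].
have Hy1w1 : y1 <<= w1 by apply/youngE => i; rewrite Hw1; lia.
case: (classic (w1 = S)) => Ew1; last first.
  exists w1 => [[_ [_ [_ [_ Hno]]]]]; apply: Hno; split; first exact: le_trans' H21 Hy1w1.
  split => //; split; last split => //.
  - move=> E; have := Hw1 r; rewrite eqxx E; move/youngE: H21 => /(_ r); lia.
  - apply: (@neq_lam _ _ r); rewrite Hw1 eqxx; lia.
case: (add1 H21 N21) => r' [w2 [Hr' [Hw2 Hw2y1]]].
have Hy2w2 : y2 <<= w2 by apply/youngE => i; rewrite Hw2; lia.
case: (classic (w2 = y1)) => Ew2; last first.
  exists w2 => [[_ [_ [_ [_ Hno]]]]]; apply: Hno; split => //.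
  split; first exact: le_trans' Hw2y1 H1S.
  split; [|split => //].
  - apply: (@neq_lam _ _ r'); rewrite Hw2 eqxx; lia.
  - move=> E; apply: N1S; apply: antisym => //; by rewrite -E.
have HS : forall i, lam S i = lam y1 i + (if i == r then 1 else 0).
  by move=> i; rewrite -Ew1 Hw1.
have HY : forall i, lam y1 i = lam y2 i + (if i == r' then 1 else 0).
  by move=> i; rewrite -Ew2 Hw2.
have Hrr : r <> r'.
  move=> E; subst r'.
  have := HS r; have := HY r; have := HS r.+1; have := HY r.+1.
  have := lam_noninc y2 (leqnSn r); rewrite !LS eqxx.
  have -> : (r.+1 == r) = false by apply/eqP; lia.
  lia.
have Hr'c : r' < c.
  have := HS r'; have := HY r'; rewrite LS eqxx. case: (r' =P r) => ?; lia.
set f := fun i => if i == r' then (c - i).-1 else c - i.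
have Hf : noninc f by nstep => k; rewrite /f; splitifs; lia.
have Hb : forall k, c <= k -> f k = 0 by move=> k Hk; rewrite /f; splitifs; lia.
set w3 := mkP f c.
have L3 k : lam w3 k = f k by apply: lam_mkP.
exists w3 => [[_ [_ [_ [_ Hno]]]]]; apply: Hno.
split; [|split; [|split; [|split]]].
- apply/youngE => k; rewrite L3 /f; have := HS k; have := HY k; rewrite LS.
  splitifs; lia.
- apply/youngE => k; rewrite L3 LS /f; splitifs; lia.
- apply: (@neq_lam _ _ r); rewrite L3 /f; have := HS r; have := HY r; rewrite LS.
  splitifs; lia.
- apply: (@neq_lam _ _ r'); rewrite L3 LS /f eqxx; lia.
- apply: (@neq_lam _ _ r'); rewrite L3 /f; have := HS r'; have := HY r'; rewrite LS.
  splitifs; lia.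
Qed.


Lemma drop_exists (f : nat -> nat) n : f n < f 0 -> exists k, k < n /\ f k.+1 < f k.
Proof.
elim: n => [|n IH] H; first lia.
case: (ltnP (f n) (f 0)) => H1.
- case: (IH H1) => k [Hk Hk2]; exists k; split => //; lia.
- exists n; split => //; lia.
Qed.

Lemma dec_part (R : ipartition) k : lam R k.+1 < lam R k ->
  exists z, forall i, lam z i = if i == k then (lam R k).-1 else lam R i.
Proof.
move=> H; exists (mkP (fun i => if i == k then (lam R k).-1 else lam R i) (size (parts R))).
apply: lam_mkP.
- nstep => i; have := lam_noninc R (leqnSn i); splitifs; lia.
- move=> i Hi; rewrite (lam_size Hi); splitifs => //.
  have := lam_pos_size (leq_ltn_trans (leq0n _) H); lia.
Qed.

Lemma TotSE x : TotS x <-> lam x 1 = 0.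
Proof. rewrite /TotS le11; lia. Qed.

Lemma notle_ex x y : ~ (x <<= y) -> exists i, lam y i < lam x i.
Proof.
move=> H; apply: NNPP => Hn; apply: H; apply/youngE => i.
rewrite leqNgt; apply/negP => Hi; apply: Hn; by exists i.
Qed.

Lemma cond_sound (r s T t R yR K J : ipartition) a b c :
  lam r 1 = 0 -> lam r 0 = a ->
  (forall z, CondS r s (stair c) (stair b) T t R yR K J z) -> a + b = c.
Proof.
move=> Hr1 Hr0 HC.
have P3 : forall z, z <<= T -> z <<= part11 \/ z = T by move=> z; case: (HC z) => [_ [_ [h [_ [_ [_ [_ [_ [_ [_ [_ [_ [_ [_ [_ [_ [_ [_ [_ [_ _]]]]]]]]]]]]]]]]]]]].
have P7 : forall z, z <<= t /\ z <> t -> z <<= r by move=> z; case: (HC z) => [_ [_ [_ [_ [_ [_ [h [_ [_ [_ [_ [_ [_ [_ [_ [_ [_ [_ [_ [_ _]]]]]]]]]]]]]]]]]]]].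
have P10 : forall z, z <<= R -> z = R \/ z <<= yR by move=> z; case: (HC z) => [_ [_ [_ [_ [_ [_ [_ [_ [_ [h [_ [_ [_ [_ [_ [_ [_ [_ [_ [_ _]]]]]]]]]]]]]]]]]]]].
have P12 : forall z, TotS z /\ z <<= R -> z <<= t by move=> z; case: (HC z) => [_ [_ [_ [_ [_ [_ [_ [_ [_ [_ [_ [h [_ [_ [_ [_ [_ [_ [_ [_ _]]]]]]]]]]]]]]]]]]]].
have P15 : forall z, ~ (T <<= z) /\ z <<= R -> z <<= K by move=> z; case: (HC z) => [_ [_ [_ [_ [_ [_ [_ [_ [_ [_ [_ [_ [_ [_ [h [_ [_ [_ [_ [_ _]]]]]]]]]]]]]]]]]]]].
have P17 : forall z, z <<= K /\ z <> K -> z <<= stair b by move=> z; case: (HC z) => [_ [_ [_ [_ [_ [_ [_ [_ [_ [_ [_ [_ [_ [_ [_ [_ [h [_ [_ [_ _]]]]]]]]]]]]]]]]]]]].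
have P21 : forall z, stair c <<= z /\ z <<= J -> z = stair c \/ z = J by move=> z; case: (HC z) => [_ [_ [_ [_ [_ [_ [_ [_ [_ [_ [_ [_ [_ [_ [_ [_ [_ [_ [_ [_ h]]]]]]]]]]]]]]]]]]]].
case: (HC r) => [Q1 [Q2 [Q3 [Q4 [Q5 [Q6 [Q7 [Q8 [Q9 [Q10 [Q11 [Q12 [Q13 [Q14 [Q15 [Q16 [Q17 [Q18 [Q19 [Q20 Q21]]]]]]]]]]]]]]]]]]]].
have LS i : lam (stair c) i = c - i by rewrite lam_stair.
have LB i : lam (stair b) i = b - i by rewrite lam_stair.
have Hr i : 1 <= i -> lam r i = 0 by move=> Hi; apply: lam_tail.
move/TotSE: Q1 => T1.
have T0 : 2 <= lam T 0.
  rewrite leqNgt; apply/negP => H; apply: Q2; apply/youngE => i; rewrite lam11.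
  case: i => [|i] /=; first lia. by rewrite lam_tail.
have T0' : lam T 0 = 2.
  case: (P3 (tot 2)).
  - apply/youngE => i; rewrite lam_tot; case: i => [|i] //=; lia.
  - move/youngE/(_ 0); rewrite lam_tot lam11 /=; lia.
  - by move=> <-; rewrite lam_tot.
have colE u : ~ (T <<= u) -> lam u 0 <= 1.
  move=> H; rewrite leqNgt; apply/negP => Hu; apply: H; apply/youngE => i.
  case: i => [|i]; first lia. rewrite (@lam_tail T) //; lia.
have colI u : lam u 0 <= 1 -> ~ (T <<= u).
  by move=> Hu /youngE /(_ 0); lia.
move/TotSE: Q4 => t1.
have t0 : a < lam t 0.
  move/youngE: Q5 => /(_ 0) H0. rewrite ltn_neqAle -Hr0 H0 andbT.
  apply/eqP => E; apply: Q6; apply: part_ext => i; case: i => [|i] //.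
  by rewrite Hr // lam_tail.
have t0' : lam t 0 = a.+1.
  apply/eqP; rewrite eqn_leq t0 andbT leqNgt; apply/negP => H.
  have : tot a.+1 <<= r.
    apply: P7; split.
    + apply/youngE => i; rewrite lam_tot; case: i => [|i] //=; lia.
    + apply: (@neq_lam _ _ 0); rewrite lam_tot /=; lia.
  move/youngE/(_ 0); rewrite lam_tot /=; lia.
have K0 := colE _ Q13.
have Kb : 1 <= lam K b.
  rewrite lt0n; apply/negP => /eqP Hb; apply: Q16; apply/youngE => i; rewrite LB.
  case: (ltnP i b) => Hi.
  - have := lam_noninc K (leq0n i); lia.
  - have := lam_noninc K Hi; lia.
have Kb1 : lam K b.+1 = 0.
  apply/eqP; rewrite -leqn0 leqNgt; apply/negP => H.
  have : colp b.+1 <<= stair b.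
    apply: P17; split.
    + apply/youngE => i; rewrite lam_colp; case: ifP => Hi //.
      have := lam_noninc K (_ : i <= b.+1); lia.
    + apply: (@neq_lam _ _ b.+1); rewrite lam_colp ltnn; lia.
  move/youngE/(_ b); rewrite lam_colp LB ltnSn subnn; lia.
have Rb : 1 <= lam R b by move/youngE: Q14 => /(_ b); lia.
have Rb1 : lam R b.+1 = 0.
  apply/eqP; rewrite -leqn0 leqNgt; apply/negP => H.
  have : colp b.+2 <<= K.
    apply: P15; split.
    + apply: colI; rewrite lam_colp //.
    + apply/youngE => i; rewrite lam_colp; case: ifP => Hi //.
      have := lam_noninc R (_ : i <= b.+1); lia.
  move/youngE/(_ b.+1); rewrite lam_colp ltnSn; lia.
have R0 : lam R 0 = a.+1.
  move/youngE: Q11 => /(_ 0) H0.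
  have : tot (lam R 0) <<= t.
    apply: P12; split; first by apply/TotSE; rewrite lam_tot.
    apply/youngE => i; rewrite lam_tot; case: i => [|i] //=.
  move/youngE/(_ 0); rewrite lam_tot /=; lia.
have Rbe : lam R b = a.+1.
  apply/eqP; rewrite eqn_leq -{1}R0 (lam_noninc R (leq0n b)) /= leqNgt; apply/negP => H.
  case: (@drop_exists (lam R) b); first lia.
  move=> k [Hk Hk2].
  case: (dec_part Hk2) => z2 Hz2.
  have Hb2 : lam R b.+1 < lam R b by lia.
  case: (dec_part Hb2) => z1 Hz1.
  have A1 : z1 <<= yR.
    case: (P10 z1).
    + apply/youngE => i; rewrite Hz1; splitifs; lia.
    + move=> E; have := Hz1 b; rewrite E eqxx; lia.
    + by [].
  have A2 : z2 <<= yR.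
    case: (P10 z2).
    + apply/youngE => i; rewrite Hz2; splitifs; lia.
    + move=> E; have := Hz2 k; rewrite E eqxx; lia.
    + by [].
  apply: Q9; apply: antisym => //; apply/youngE => i.
  move/youngE: A1 => /(_ i); move/youngE: A2 => /(_ i).
  rewrite Hz1 Hz2; splitifs; lia.
have LR i : lam R i = if i <= b then a.+1 else 0.
  case: ifP => Hi.
  - apply/eqP; rewrite eqn_leq -{1}R0 (lam_noninc R (leq0n i)) /= -Rbe.
    exact: lam_noninc.
  - have := lam_noninc R (_ : b.+1 <= i); lia.
have NSJ : stair c <> J by move=> E; apply: Q18; rewrite E.
have HJ : forall w, stair c <<= w -> w <<= J -> w = stair c \/ w = J.
  by move=> w H1 H2; apply: P21.
case: (cover_char Q20 NSJ HJ) => r0 Hr0J.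
case: (notle_ex Q18) => i0 Hi0.
move/youngE: Q19 => RJ.
have F1 := RJ i0; have F2 := RJ b; have F3 := RJ b.-1.
rewrite !Hr0J !LS !LR in F1 F2 F3 Hi0.
rewrite leqnn in F2. have Hb1 : b.-1 <= b by lia. rewrite Hb1 in F3.
move: F1 Hi0; case: ifP => Hi0b; last lia.
move=> F1 Hi0.
move: F1 F2 F3; splitifs; lia.
Qed.

Ltac ifs := repeat match goal with
  | |- context[if ?a == ?b then _ else _] => case: (a =P b) => ?
  | |- context[if ?c then _ else _] => case: ifP => ? end;
  repeat match goal with H : S ?x = S ?y |- _ => case: H => H end; try subst.

Lemma tot_eq r : lam r 1 = 0 -> r = tot (lam r 0).
Proof.
move=> H; apply: part_ext => i; rewrite lam_tot; case: i => [|i] //=.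
by rewrite lam_tail.
Qed.

Lemma cond_complete (r s : ipartition) a b c : lam r 1 = 0 -> lam r 0 = a -> a + b = c ->
  exists T t R yR K J, forall z, CondS r s (stair c) (stair b) T t R yR K J z.
Proof.
move=> Hr1 Hr0 Habc.
have Er : r = tot a by rewrite (tot_eq Hr1) Hr0.
subst r.
set fy := fun i => if i < b then a.+1 else if i == b then a else 0.
have Ly i : lam (mkP fy b.+1) i = fy i.
  apply: lam_mkP; first by nstep => k; rewrite /fy; ifs; lia.
  by move=> k Hk; rewrite /fy; ifs; lia.
set fJ := fun i => c - i + (if i == b then 1 else 0).
have LJ i : lam (mkP fJ c.+1) i = fJ i.
  apply: lam_mkP; first by nstep => k; rewrite /fJ; ifs; lia.
  by move=> k Hk; rewrite /fJ; ifs; lia.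
exists (tot 2), (tot a.+1), (rect b.+1 a.+1), (mkP fy b.+1), (colp b.+1), (mkP fJ c.+1).
move=> z.
have LS i : lam (stair c) i = c - i by rewrite lam_stair.
have LB i : lam (stair b) i = b - i by rewrite lam_stair.
have NZ i j : i <= j -> lam z j <= lam z i by apply: lam_noninc.
refine (conj _ (conj _ (conj _ (conj _ (conj _ (conj _ (conj _ (conj _ (conj _ (conj _
  (conj _ (conj _ (conj _ (conj _ (conj _ (conj _ (conj _ (conj _ (conj _ (conj _ _)))))))))))))))))))).
- by apply/TotSE; rewrite lam_tot.
- by move/youngE/(_ 0); rewrite lam_tot lam11.
- move/youngE => H; case: (lam z 0 =P 2) => E.
  + right; apply: part_ext => i; have := H i; rewrite lam_tot; case: i => [|i] /=; lia.
  + left; apply/youngE => i; have := H i; rewrite lam_tot lam11; ifs; lia.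
- by apply/TotSE; rewrite lam_tot.
- apply/youngE => i; rewrite !lam_tot; ifs; lia.
- apply: (@neq_lam _ _ 0); rewrite !lam_tot /=; lia.
- move=> [/youngE H N]; case: (lam z 0 =P a.+1) => E.
  + exfalso; apply: N; apply: part_ext => i; have := H i; rewrite lam_tot; case: i => [|i] /=; lia.
  + apply/youngE => i; have := H i; rewrite !lam_tot; ifs; lia.
- apply/youngE => i; rewrite Ly lam_rect /fy; ifs; lia.
- apply: (@neq_lam _ _ b); rewrite Ly lam_rect /fy; ifs; lia.
- move/youngE => H; case: (lam z b =P a.+1) => E.
  + left; apply: part_ext => i; have := H i; rewrite lam_rect.
    case: (leqP i b) => Hib; first by have := NZ _ _ Hib; ifs; lia.
    ifs; lia.
  + right; apply/youngE => i; have := H i; have := H b; rewrite !lam_rect Ly /fy; ifs; lia.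
- apply/youngE => i; rewrite lam_rect lam_tot; ifs; lia.
- move=> [/TotSE H1 /youngE H2]; apply/youngE => i; have := H2 i; rewrite lam_rect lam_tot.
  case: i => [|i] /=; first lia. by rewrite lam_tail.
- by move/youngE/(_ 0); rewrite lam_tot lam_colp.
- apply/youngE => i; rewrite lam_rect lam_colp; ifs; lia.
- move=> [H1 /youngE H2].
  have H0 : lam z 0 <= 1.
    rewrite leqNgt; apply/negP => H; apply: H1; apply/youngE => i; rewrite lam_tot.
    case: i => [|i] //=.
  apply/youngE => i; have := H2 i; have := NZ 0 i (leq0n _); rewrite lam_rect lam_colp; ifs; lia.
- by move/youngE/(_ b); rewrite lam_colp LB ltnSn subnn.
- move=> [/youngE H N]; case: (lam z b =P 1) => E.
  + exfalso; apply: N; apply: part_ext => i; have := H i; rewrite lam_colp.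
    case: (leqP i b) => Hib; first by have := NZ _ _ Hib; ifs; lia.
    ifs; lia.
  + apply/youngE => i; have := H i; have := H b; rewrite !lam_colp LB.
    case: (leqP b i) => Hib; first by have := NZ _ _ Hib; ifs; lia.
    ifs; lia.
- by move/youngE/(_ b); rewrite lam_rect LS ltnSn; lia.
- apply/youngE => i; rewrite lam_rect LJ /fJ; ifs; lia.
- apply/youngE => i; rewrite LJ LS /fJ; ifs; lia.
- move=> [/youngE H1 /youngE H2]; case: (lam z b =P c - b) => E.
  + left; apply: part_ext => i; have := H1 i; have := H2 i; rewrite LJ LS /fJ; ifs; lia.
  + right; apply: part_ext => i; have := H1 i; have := H2 i; have := H1 b; have := H2 b.
    rewrite !LJ !LS /fJ; ifs; lia.
Qed.

Lemma stair_ok (p : ipartition) c : lam p 1 = 0 -> lam p 0 = c ->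
  p <<= stair c /\ (forall t, TotS t -> t <<= stair c -> t <<= p).
Proof.
move=> H1 H0; split.
- apply/youngE => i; rewrite lam_stair; case: i => [|i]; first lia.
  by rewrite lam_tail.
- move=> t /TotSE Ht /youngE Hts; apply/youngE => i; have := Hts i; rewrite lam_stair.
  case: i => [|i]; first lia. by rewrite (@lam_tail t).
Qed.

Lemma ns_choice (p S : ipartition) c : lam p 1 = 0 -> lam p 0 = c ->
  (exists y1 y2 t, forall w, NSS p S y1 y2 t w) \/ S = stair c.
Proof.
move=> H1 H0.
case: (classic (p <<= S)) => HpS; last by left; exists p, p, p => w; left.
case: (classic (exists t, TotS t /\ t <<= S /\ ~ (t <<= p))) => Ht.
  left; case: Ht => t Ht; exists p, p, t => w; right; left; exact: Ht.
case: (classic (exists y1 y2, forall w, DomS S y1 y2 w)) => Hd.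
  left; case: Hd => y1 [y2 Hd]; exists y1, y2, p => w; right; right; exact: Hd.
right.
have Hnd : forall y1 y2, ~ (forall w, DomS S y1 y2 w).
  by move=> y1 y2 H; apply: Hd; exists y1, y2.
have HS0 : lam S 0 = c.
  apply/eqP; rewrite eqn_leq; apply/andP; split.
  - have : tot (lam S 0) <<= p.
      apply: NNPP => Hn; apply: Ht; exists (tot (lam S 0)); split.
      + by apply/TotSE; rewrite lam_tot.
      split => //; apply/youngE => i; rewrite lam_tot; case: i => [|i] //=.
    by move/youngE/(_ 0); rewrite lam_tot H0.
  - by move/youngE: HpS => /(_ 0); rewrite H0.
apply: part_ext => i; rewrite lam_stair; exact: stair_of.
Qed.

Theorem proposition3p10 :
  Pi_definable3 3 (fun rho sigma pi =>
    [/\ is_total rho, is_total sigma, is_total pi & psize rho + psize sigma = psize pi]).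
Proof.
exists phi; split; first exact: phi_Pi.
move=> e; rewrite sat_phi.
set r := e 0; set s := e 1; set p := e 2.
split.
- move=> [/is_total_lam Hr /is_total_lam Hs /is_total_lam Hp Hsum].
  rewrite !psize_tot in Hsum; try by apply/is_total_lam.
  have Tr : TotS r by apply/TotSE.
  have Ts : TotS s by apply/TotSE.
  have Tp : TotS p by apply/TotSE.
  move=> S B.
  case: (ns_choice S Hp (erefl _)) => [[y1 [y2 [t HS]]]|ES].
    exists y1, y2, t, S, S, S, S, S, S, S, S, S => w wB z.
    by do 3 (split => //); left.
  case: (ns_choice B Hs (erefl _)) => [[y1 [y2 [t HB]]]|EB].
    exists S, S, S, y1, y2, t, S, S, S, S, S, S => w wB z.
    by do 3 (split => //); right; left.
  case: (cond_complete s Hr (erefl _) Hsum) => T [t [R [yR [K [J HC]]]]].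
  exists S, S, S, S, S, S, T, t, R, yR, K, J => w wB z.
  do 3 (split => //); right; right; rewrite ES EB; exact: HC.
- move=> H.
  case: (H (stair (lam p 0)) (stair (lam s 0))) =>
    y1 [y2 [ts [y1B [y2B [tB [T [t [R [yR [K [J HM]]]]]]]]]]].
  case: (HM p p p) => /TotSE Hr [/TotSE Hs [/TotSE Hp _]].
  case: (stair_nd (lam p 0) y1 y2) => w0 Hw0.
  case: (stair_nd (lam s 0) y1B y2B) => wB0 HwB0.
  have [Sp1 Sp2] := stair_ok Hp (erefl _).
  have [Ss1 Ss2] := stair_ok Hs (erefl _).
  have HC : forall z, CondS r s (stair (lam p 0)) (stair (lam s 0)) T t R yR K J z.
    move=> z; case: (HM w0 wB0 z) => _ [_ [_ [N1|[N2|N3]]]] //.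
    + exfalso; case: N1 => [//|[[A1 [A2 A3]]|//]]. by apply: A3; apply: Sp2.
    + exfalso; case: N2 => [//|[[A1 [A2 A3]]|//]]. by apply: A3; apply: Ss2.
  have Hsum := cond_sound Hr (erefl _) HC.
  split; try by apply/is_total_lam.
  rewrite !psize_tot; try by apply/is_total_lam.
  exact: Hsum.
Qed.
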